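(* Let $\textsc{Om}_z$ be the fitness function with unknown target $z\in\{0,1\}^n$ and let $x$ be the current search point. Let $B$ be a set of $b$ known bit positions of which at least $b_0=\beta b$ positions $i$ are non-optimal (i.e., $x_i\neq z_i$), for some $\beta>0$, with the positions of the non-optimal bits distributed uniformly at random in $B$. Let $C,C'$ be sets of bit positions with $|C|=|C'|\le b_0/2$ such that $B,C,C'$ are pairwise disjoint. Then there is a $(1+1)$ elitist black-box strategy that copies the bits of $x$ in $C$ into the positions $C'$ (in a fixed order-preserving correspondence). For any $c>0$ this strategy requires at most $c\cdot|C|\cdot\log(n)/\beta$ iterations with probability $1-n^{-\Omega(c)}$. After the copy operation, at least $b_0-|C|$ bits in $B$ are non-optimal, and their positions are uniformly at random in $B$. The same strategy can be used to overwrite $C'$ with a fixed string (e.g., $(1,\ldots,1)$).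
   Context: For $z\in\{0,1\}^n$, $\textsc{Om}_z(x)=n-\sum_{i=1}^n(x_i\oplus z_i)$. A bit $x_i$ is optimal if $x_i=z_i$, non-optimal otherwise. A $(1+1)$ elitist black-box algorithm stores a single search point $x$; in each iteration it samples an offspring $y$ from a distribution depending only on $x$ (and, for a strategy, on known positions such as $B,C,C'$), learns only whether $f(y)$ is smaller, equal or larger than $f(x)$, and must keep a point of highest fitness among $x,y$ (ties broken arbitrarily). *)

(* Defs.v *)
From HB Require Import structures.
From mathcomp Require Import all_boot all_order all_algebra.
From mathcomp Require Import reals sequences exp.
Set Implicit Arguments. Unset Strict Implicit. Unset Printing Implicit Defensive.
Import Order.TTheory GRing.Theory Num.Theory.
Local Open Scope ring_scope.

Definition bs (n : nat) := {ffun 'I_n -> bool}.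

Definition OM n (z x : bs n) : nat := (n - \sum_(i < n) (x i (+) z i : nat))%N.

Definition nonopt n (z x : bs n) : {set 'I_n} := [set i | x i != z i].

(* A (1+1) elitist black-box strategy (for fixed, known n, B, C, C'):
   - offs x : distribution of the offspring, depending only on x;
   - tie x y : whether y replaces x when f(y) = f(x) (ties broken arbitrarily);
   - stop x : the strategy's (observable) termination test on the current point. *)
Record strategy (R : realType) (n : nat) := Strategy {
  offs : bs n -> {ffun bs n -> R};
  offs_ge0 : forall x y, 0 <= offs x y;
  offs_sum1 : forall x, \sum_y offs x y = 1;
  tie : bs n -> bs n -> bool;
  stop : bs n -> bool }.

Definition select n (t : bs n -> bs n -> bool) (z x y : bs n) : bs n :=
  if (OM z x < OM z y)%N then y
  else if OM z y == OM z x then (if t x y then y else x) else x.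

Definition kern (R : realType) n (S : strategy R n) (z x x' : bs n) : R :=
  if stop S x then (x' == x)%:R
  else \sum_y offs S x y * (select (tie S) z x y == x')%:R.

(* law S z t x0 x' = Pr[ stopped chain started at x0 is at x' after t iterations ] *)
Fixpoint law (R : realType) n (S : strategy R n) (z : bs n) (t : nat) (x0 x' : bs n) : R :=
  match t with
  | 0 => (x' == x0)%:R
  | t'.+1 => \sum_x law S z t' x0 x * kern S z x x'
  end.

(* the m-subsets of B (possible sets of non-optimal positions in B) *)
Definition nsub n (B : {set 'I_n}) (m : nat) : {set {set 'I_n}} :=
  [set N : {set 'I_n} | (N \subset B) && (#|N| == m)].

(* the target determined by x0, the set N of non-optimal positions in B,
   and the (arbitrary, fixed) target bits zout outside B *)
Definition targ n (B N : {set 'I_n}) (x0 zout : bs n) : bs n :=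
  [ffun i => if i \in B then (if i \in N then ~~ x0 i else x0 i) else zout i].

(* Pr[ tau <= t and P N (x_tau) ], where N is uniform among the m-subsets of B
   and tau is the first time at which stop holds *)
Definition prob_stop (R : realType) n (S : strategy R n) (B : {set 'I_n}) (m : nat)
    (x0 zout : bs n) (t : nat) (P : {set 'I_n} -> bs n -> bool) : R :=
  (#|nsub B m|%:R)^-1 *
  \sum_(N in nsub B m) \sum_(x | stop S x && P N x) law S (targ B N x0 zout) t x0 x.

(* x carries in C' the bits of x0 in C, via the order-preserving bijection C -> C' *)
Definition copied n (C C' : {set 'I_n}) (x0 x : bs n) : Prop :=
  forall i j, i \in C -> j \in C' -> index i (enum C) = index j (enum C') -> x j = x0 i.

(* the goal on C': [None] = copy the bits of x0 in C into C';
   [Some w] = overwrite C' with the fixed string w (restricted to C') *)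
Definition goal_ok n (w : option (bs n)) (C C' : {set 'I_n}) (x0 x : bs n) : Prop :=
  match w with
  | None => copied C C' x0 x
  | Some w => forall j, j \in C' -> x j = w j
  end.

(* Main.v *)
Require Import Defs.
From HB Require Import structures.
From mathcomp Require Import all_boot all_order all_algebra.
From mathcomp Require Import reals sequences exp.
From mathcomp Require Import zify ring lra.
Set Implicit Arguments. Unset Strict Implicit. Unset Printing Implicit Defensive.
Import Order.TTheory GRing.Theory Num.Theory.
Local Open Scope ring_scope.



Lemma psum_exists (T : finType) (P : pred T) (R : realType) (F : T -> R) :
  0 < \sum_(i | P i) F i -> exists2 i, P i & 0 < F i.
Proof.
move=> H; case: (boolP [exists i, P i && (0 < F i)]).
  by move/existsP=> [i /andP[]]; exists i.
move/existsPn=> Hn; exfalso; move: H; apply/negP; rewrite -leNgt.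
apply: sumr_le0 => i Pi; move: (Hn i); rewrite Pi /= leNgt; done.
Qed.

Lemma num_ineq (R : realType) (k s beta t : R) : 1 <= k -> 10 <= s -> beta <= 1 ->
  k * s - beta <= beta * t -> - (beta / 4) * t + k <= - (s / 8).
Proof.
move=> h1 h2 h3 h4.
have H : 0 <= (k - 1) * (s - 10) by apply: mulr_ge0; lra.
have E : - (beta / 4) * t = - (beta * t) / 4 by ring.
rewrite E; nra.
Qed.

Lemma two_le_e (R : realType) : (2 : R) <= expR 1.
Proof. by have := expR_ge1Dx (1 : R); lra. Qed.

Lemma two_ge0 (R : realType) : (0 : R) <= 2.
Proof. lra. Qed.

Section S.
Variable R : realType.
Variables (n : nat) (B C C' : {set 'I_n}) (w : option (bs n)).
Hypothesis dBC : [disjoint B & C].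
Hypothesis dBC' : [disjoint B & C'].
Hypothesis dCC' : [disjoint C & C'].
Hypothesis cCC' : #|C| = #|C'|.

Definition partner (j : 'I_n) : 'I_n := nth j (enum C) (index j (enum C')).
Definition tv (x : bs n) (j : 'I_n) : bool :=
  if w is Some w' then w' j else x (partner j).
Definition wrong (x : bs n) : {set 'I_n} := [set j in C' | x j != tv x j].
Definition stopb (x : bs n) : bool := wrong x == set0.
Definition pj (x : bs n) : option 'I_n := [pick j in wrong x].
Definition mut (x : bs n) (i : 'I_n) : bs n :=
  [ffun k => x k (+) ((k == i) || (Some k == pj x))].
Definition offsf (x : bs n) : {ffun bs n -> R} :=
  [ffun y => if #|B| == 0%N then (y == x)%:R
             else \sum_(i in B) (#|B|%:R)^-1 * (y == mut x i)%:R].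

Lemma offsf_ge0 x y : 0 <= offsf x y.
Proof.
rewrite ffunE; case: ifP => _; first by rewrite ler0n.
apply: sumr_ge0 => i _; apply: mulr_ge0; last by rewrite ler0n.
by rewrite invr_ge0 ler0n.
Qed.

Lemma offsf_sum1 x : \sum_y offsf x y = 1.
Proof.
under eq_bigr do rewrite ffunE.
have [HB|HB] := eqVneq #|B| 0%N.
  by rewrite (bigD1 x) //= eqxx big1 ?addr0 // => y /negbTE ->.
rewrite exchange_big /=.
have E : forall i, \sum_y (#|B|%:R)^-1 * (y == mut x i)%:R = (#|B|%:R)^-1 :> R.
  move=> i; rewrite -big_distrr /= (bigD1 (mut x i)) //= eqxx big1 ?addr0 ?mulr1 //.
  by move=> y /negbTE ->.
under eq_bigr do rewrite E.
rewrite sumr_const -[_ *+ _]mulr_natr mulVf //.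
by rewrite pnatr_eq0.
Qed.

Definition Sg : strategy R n :=
  @Strategy R n offsf offsf_ge0 offsf_sum1 (fun _ _ => true) stopb.


Implicit Types (z x y : bs n) (f : bs n -> R).

Notation sel z x y := (select (fun _ _ => true) z x y).

Lemma selE z x y : sel z x y = if (OM z x <= OM z y)%N then y else x.
Proof.
rewrite /select; case: (ltngtP (OM z x) (OM z y)) => //.
Qed.

Definition Ek z x (f : bs n -> R) := \sum_x' kern Sg z x x' * f x'.

Lemma EkE z x f : Ek z x f =
  if stopb x then f x else \sum_y offsf x y * f (sel z x y).
Proof.
rewrite /Ek /kern /=; case: ifP => _.
  by rewrite (bigD1 x) //= eqxx mul1r big1 ?addr0 // => y /negbTE ->; rewrite mul0r.
under eq_bigr do rewrite big_distrl /=.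
rewrite exchange_big /=; apply: eq_bigr => y _.
rewrite (bigD1 (sel z x y)) //= eqxx mulr1 big1 ?addr0 //.
by move=> x' /negbTE; rewrite eq_sym => ->; rewrite mulr0 mul0r.
Qed.

Lemma kern_ge0 z x x' : 0 <= kern Sg z x x'.
Proof.
rewrite /kern; case: ifP => _; first by rewrite ler0n.
apply: sumr_ge0 => y _; apply: mulr_ge0; [exact: offs_ge0 | by rewrite ler0n].
Qed.

Lemma law_ge0 z t x0 x : 0 <= law Sg z t x0 x.
Proof.
elim: t x => [|t IH] x /=; first by rewrite ler0n.
by apply: sumr_ge0 => y _; apply: mulr_ge0; [exact: IH | exact: kern_ge0].
Qed.

Lemma law_step z t x0 f : \sum_x' law Sg z t.+1 x0 x' * f x' =
  \sum_x law Sg z t x0 x * Ek z x f.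
Proof.
rewrite /=; under eq_bigr do rewrite big_distrl /=.
rewrite exchange_big /=; apply: eq_bigr => x _.
by rewrite /Ek big_distrr /=; apply: eq_bigr => x' _; rewrite mulrA.
Qed.

Lemma Ek1 z x : Ek z x (fun _ => 1) = 1.
Proof.
rewrite EkE; case: ifP => // _.
under eq_bigr do rewrite mulr1. exact: offsf_sum1.
Qed.

Lemma law_sum1 z t x0 : \sum_x law Sg z t x0 x = 1.
Proof.
elim: t => [|t IH].
  by rewrite /= (bigD1 x0) //= eqxx big1 ?addr0 // => y /negbTE ->.
have := law_step z t x0 (fun _ => 1).
under eq_bigr do rewrite mulr1.
move=> ->; under eq_bigr do rewrite Ek1 mulr1. exact: IH.
Qed.

Lemma Ek_B z x f : ~~ stopb x -> #|B| != 0%N ->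
  Ek z x f = \sum_(i in B) (#|B|%:R)^-1 * f (sel z x (mut x i)).
Proof.
move=> Hs HB; rewrite EkE (negbTE Hs).
under eq_bigr do rewrite ffunE (negbTE HB) big_distrl /=.
rewrite exchange_big /=; apply: eq_bigr => i _.
rewrite (bigD1 (mut x i)) //= eqxx mulr1 big1 ?addr0 //.
by move=> y /negbTE ->; rewrite mulr0 mul0r.
Qed.


Lemma neq_dis (A1 A2 : {set 'I_n}) a b :
  [disjoint A1 & A2] -> a \in A1 -> b \in A2 -> a != b.
Proof. by move=> H ha hb; apply/eqP => E; subst; rewrite (disjointFr H ha) in hb. Qed.

Lemma partner_in j : j \in C' -> partner j \in C.
Proof.
move=> hj; rewrite /partner -mem_enum; apply: mem_nth.
by rewrite -cardE cCC' cardE index_mem mem_enum.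
Qed.

Lemma wrong_sub x : wrong x \subset C'.
Proof. by apply/subsetP => k; rewrite inE => /andP[]. Qed.

Lemma pj_some x : ~~ stopb x -> exists j, pj x = Some j /\ j \in wrong x.
Proof.
rewrite /stopb /pj => Hs; case: pickP => [j hj|H]; first by exists j.
exfalso; move/negP: Hs; apply; apply/eqP/setP => k.
by have := H k; rewrite inE /= => ->; rewrite inE.
Qed.

Lemma pj_C' x j : pj x = Some j -> j \in C'.
Proof.
rewrite /pj; case: pickP => // k hk [<-].
by move/subsetP: (wrong_sub x); apply.
Qed.

Lemma mut_other x i k : k != i -> Some k != pj x -> mut x i k = x k.
Proof. by move=> h1 h2; rewrite ffunE (negbTE h1) (negbTE h2) addbF. Qed.

Lemma mut_out x i k : i \in B -> k \notin B -> k \notin C' -> mut x i k = x k.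
Proof.
move=> hi hB hC; apply: mut_other.
  by apply/eqP=> E; subst; rewrite hi in hB.
case E: (pj x) => [j|] //; apply/eqP => [[E2]]; subst.
by rewrite (pj_C' E) in hC.
Qed.

Lemma wrong_mut x i j : i \in B -> pj x = Some j ->
  wrong (mut x i) = wrong x :\ j.
Proof.
move=> hi hj; have jC := pj_C' hj.
have jw : j \in wrong x by move: hj; rewrite /pj; case: pickP => // k hk [<-].
apply/setP => k; rewrite !inE.
case kC: (k \in C'); rewrite ?andbF //=.
have tvE : tv (mut x i) k = tv x k.
  rewrite /tv; case: w => [?|] //; apply: mut_other.
    by apply: (neq_dis (A1 := C) (A2 := B)) => //; [rewrite disjoint_sym | exact: partner_in].
  rewrite hj; apply/eqP => [[E]].
  by move: (neq_dis dCC' (partner_in kC) jC); rewrite E eqxx.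
rewrite tvE ffunE hj.
have -> : (k == i) = false by apply/negbTE; rewrite eq_sym (neq_dis dBC' hi kC).
rewrite /=; have [->|nkj] := eqVneq k j.
  by rewrite eqxx /=; move: jw; rewrite inE => /andP[_]; case: (x j); case: (tv x j).
have -> : (Some k == Some j) = false by apply/negbTE; apply: contra nkj => /eqP [->].
by rewrite addbF.
Qed.

Definition Dn z x := (\sum_(k < n) (x k (+) z k : nat))%N.

Lemma Dn_le z x : (Dn z x <= n)%N.
Proof.
rewrite /Dn; apply: leq_trans (_ : \sum_(k < n) 1 <= n)%N.
  by apply: leq_sum => k _; case: (x k (+) z k).
by rewrite sum1_card card_ord.
Qed.

Lemma accept z x i j : i \in B -> pj x = Some j -> x i != z i ->
  (OM z x <= OM z (mut x i))%N.
Proof.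
move=> hi hj hxi; rewrite /OM; apply: leq_sub2l.
have jC := pj_C' hj; have nji : j != i by rewrite eq_sym (neq_dis dBC' hi jC).
have S2 : forall F : 'I_n -> nat, (\sum_(k < n) F k =
     F i + F j + \sum_(k < n | (k != i) && (k != j)) F k)%N.
  by move=> F; rewrite (bigD1 i) //= (bigD1 j nji) /= addnA.
rewrite (S2 (fun k => mut x i k (+) z k : nat)) (S2 (fun k => x k (+) z k : nat)).
have -> : (\sum_(k < n | (k != i) && (k != j)) (mut x i k (+) z k : nat) =
          \sum_(k < n | (k != i) && (k != j)) (x k (+) z k : nat))%N.
  apply: eq_bigr => k /andP[h1 h2]; rewrite mut_other // hj.
  by apply: contra h2 => /eqP [->].
rewrite !ffunE eqxx /= hj eqxx orbT /= leq_add2r.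
by move: hxi; case: (x i); case: (z i) => //= _; case: (x j); case: (z j).
Qed.

Definition Inv z x0 x :=
  (forall k, k \notin B -> k \notin C' -> x k = x0 k) /\
  (#|B :&: nonopt z x0| + #|wrong x| <= #|B :&: nonopt z x| + #|wrong x0|)%N.

Lemma kern_pos z x x' : 0 < kern Sg z x x' ->
  x' = x \/ (exists i j, [/\ i \in B, pj x = Some j, x' = mut x i &
                          (OM z x <= OM z (mut x i))%N]).
Proof.
rewrite /kern /=; case: ifP => hs.
  by case: eqP => [->|]; [left | rewrite ltxx].
move/psum_exists => [y _].
case E: (sel z x y == x'); last by rewrite mulr0 ltxx.
move/eqP: E => <-; rewrite mulr1 ffunE selE.
case: eqP => HB.
  by case: eqP => [-> _|]; [left; case: ifP | rewrite ltxx].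
move/psum_exists => [i hi]; case: eqP => [->|]; last by rewrite mulr0 ltxx.
move=> _; case: ifP => hacc; last by left.
have [j [hj _]] := pj_some (negbT hs).
by right; exists i, j.
Qed.

Lemma Inv_step z x0 x x' : Inv z x0 x -> 0 < kern Sg z x x' -> Inv z x0 x'.
Proof.
move=> [H1 H2] /kern_pos [->|[i [j [hi hj -> _]]]]; first by [].
have jw : j \in wrong x by move: hj; rewrite /pj; case: pickP => // k hk [<-].
split; first by move=> k hB hC; rewrite mut_out // H1.
rewrite (wrong_mut hi hj); rewrite (cardsD1 j (wrong x)) jw in H2.
have : (#|B :&: nonopt z x| <= #|B :&: nonopt z (mut x i)| + 1)%N.
  rewrite (cardsD1 i (B :&: nonopt z x)) addnC leq_add //; last by case: (_ \in _).
  apply: subset_leq_card; apply/subsetP => k; rewrite !inE => /andP[nki /andP[kB kn]].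
  rewrite kB mut_other // hj; apply/eqP => [[E]]; subst.
  by move: (pj_C' hj); rewrite (disjointFr dBC' kB).
move: H2; rewrite /nat_of_bool add1n addnS => H2 H3.
move: H2 H3; move: #|B :&: nonopt z x0| #|wrong x :\ j| #|B :&: nonopt z x| #|B :&: nonopt z (mut x i)| #|wrong x0| => a b c d e H2 H3; lia.
Qed.

Lemma pmul_pos (a b : R) : 0 <= a -> 0 <= b -> 0 < a * b -> 0 < a /\ 0 < b.
Proof.
rewrite !le_eqVlt => /orP[/eqP<-|ha] /orP[/eqP<-|hb]; rewrite ?mul0r ?mulr0 ?ltxx //.
Qed.

Lemma law_Inv z t x0 x : 0 < law Sg z t x0 x -> Inv z x0 x.
Proof.
elim: t x => [|t IH] x /=.
  by case: eqP => [-> _|]; [split | rewrite ltxx].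
move/psum_exists => [y _ hp].
have [h1 h2] := pmul_pos (law_ge0 _ _ _ _) (kern_ge0 _ _ _) hp.
exact: (Inv_step (IH _ h1) h2).
Qed.



Lemma sum_ind (A : {set 'I_n}) : \sum_(i in B) ((i \in A)%:R : R) = #|B :&: A|%:R.
Proof.
rewrite (eq_bigr (fun i => if i \in A then 1 else 0)); last by move=> i _; case: (_ \in _).
rewrite -big_mkcondr /= sumr_const; congr (_ *+ _).
by apply: eq_card => i; rewrite !inE.
Qed.

Definition fV x : R := if stopb x then 0 else 2 ^+ #|wrong x|.

Lemma fV_ge0 x : 0 <= fV x.
Proof. by rewrite /fV; case: ifP => _ //; apply: exprn_ge0; lra. Qed.

Lemma wrong_le x : (#|wrong x| <= #|C|)%N.
Proof. by rewrite cCC'; exact: subset_leq_card (wrong_sub x). Qed.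

Lemma Ek_fV z x0 x (beta : R) (m : nat) :
  0 < beta -> beta * #|B|%:R <= m%:R -> #|C|%:R <= beta * #|B|%:R / 2 ->
  (m <= #|B :&: nonopt z x0|)%N -> Inv z x0 x ->
  Ek z x fV <= (1 - beta / 4) * fV x.
Proof.
move=> hb hm hC hx0 [_ HI].
have [hs|hs] := boolP (stopb x); first by rewrite EkE hs /fV hs mulr0.
have w0 := wrong_le x0; have w1 := wrong_le x.
have [j [hj jw]] := pj_some hs.
have wpos : (0 < #|wrong x|)%N by apply/card_gt0P; exists j.
have hnb : (m <= #|B :&: nonopt z x| + #|C|)%N.
  move: HI hx0 w0 wpos; move: #|B :&: nonopt z x0| #|wrong x| #|B :&: nonopt z x| #|wrong x0| #|C| => *; lia.
have HB : #|B| != 0%N.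
  apply/eqP => E; move: hC; rewrite E mulr0 mul0r lern0 => /eqP E2.
  by move: w1 wpos; rewrite E2 leqn0 => /eqP ->.
rewrite (Ek_B _ _ hs HB).
case E: #|wrong x| wpos => [|wr'] // _.
set h : R := 2 ^+ wr'.
have h0 : 0 <= h by apply: exprn_ge0; lra.
have fVx : fV x = 2 * h by rewrite /fV (negbTE hs) E exprS.
have step : forall i, i \in B -> fV (sel z x (mut x i)) <= 2 * h - (i \in nonopt z x)%:R * h.
  move=> i hi; rewrite selE; case: ifP => hacc.
    have : fV (mut x i) <= h.
      rewrite /fV; case: ifP => _ //.
      rewrite (wrong_mut hi hj).
      have := cardsD1 j (wrong x); rewrite jw E /= add1n => [[<-]].
      by [].
    by case: (_ \in _) => /= H; lra.
  have : i \notin nonopt z x.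
    by apply/negP; rewrite inE => hn; rewrite (accept hi hj hn) in hacc.
  by move/negbTE => ->; rewrite fVx /=; lra.
apply: le_trans (_ : \sum_(i in B) (#|B|%:R)^-1 * (2 * h - (i \in nonopt z x)%:R * h) <= _).
  apply: ler_sum => i hi; apply: ler_wpM2l; first by rewrite invr_ge0 ler0n.
  exact: step.
rewrite -big_distrr /= sumrB sumr_const -big_distrl /= sum_ind fVx.
set Bn : R := #|B|%:R; set nb : R := #|B :&: nonopt z x|%:R.
have Bn0 : 0 < Bn by rewrite /Bn ltr0n lt0n.
have hnbR : m%:R <= nb + #|C|%:R by rewrite /nb -natrD ler_nat.
have key : beta / 2 <= nb / Bn.
  rewrite ler_pdivlMr //; lra.
have -> : Bn^-1 * (2 * h *+ #|B| - nb * h) = 2 * h - (nb / Bn) * h.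
  rewrite -mulr_natr -/Bn; field; lra.
have := ler_wpM2r h0 key; lra.
Qed.


Lemma Vdecay z x0 (beta : R) (m : nat) t :
  0 < beta -> beta <= 1 -> beta * #|B|%:R <= m%:R -> #|C|%:R <= beta * #|B|%:R / 2 ->
  (m <= #|B :&: nonopt z x0|)%N ->
  \sum_x law Sg z t x0 x * fV x <= (1 - beta / 4) ^+ t * fV x0.
Proof.
move=> hb hb1 hm hC hx0; elim: t => [|t IH].
  rewrite expr0 mul1r /= (bigD1 x0) //= eqxx mul1r big1 ?addr0 //.
  by move=> y /negbTE ->; rewrite mul0r.
rewrite law_step.
apply: le_trans (_ : \sum_x law Sg z t x0 x * ((1 - beta / 4) * fV x) <= _).
  apply: ler_sum => x _; have := law_ge0 z t x0 x; rewrite le_eqVlt => /orP[/eqP <-|hp].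
    by rewrite !mul0r.
  apply: ler_wpM2l; first exact: ltW.
  exact: (Ek_fV hb hm hC hx0 (law_Inv hp)).
under eq_bigr do rewrite mulrCA.
rewrite -big_distrr /= exprS -mulrA; apply: ler_wpM2l; first lra.
exact: IH.
Qed.

Lemma nonstop_mass z x0 t :
  \sum_(x | ~~ stopb x) law Sg z t x0 x <= \sum_x law Sg z t x0 x * fV x.
Proof.
rewrite big_mkcond /=; apply: ler_sum => x _.
rewrite /fV; case: (stopb x) => /=; first by rewrite mulr0.
rewrite -[X in X <= _]mulr1; apply: ler_wpM2l; first exact: law_ge0.
by apply: exprn_ege1; lra.
Qed.

Lemma stop_mass z x0 t :
  \sum_(x | stopb x) law Sg z t x0 x = 1 - \sum_(x | ~~ stopb x) law Sg z t x0 x.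
Proof. by have := law_sum1 z t x0; rewrite (bigID stopb) /= => <-; rewrite addrK. Qed.


Section Sym.
Variables (a b : 'I_n) (x0 : bs n).
Hypotheses (aB : a \in B) (bB : b \in B).

Definition sw (k : 'I_n) : 'I_n := if k == a then b else if k == b then a else k.

Lemma sw_inv k : sw (sw k) = k.
Proof.
rewrite /sw; case: (eqVneq k a) => [->|ka].
  rewrite eqxx; case: (eqVneq b a) => [->|ba] //; by rewrite eqxx.
case: (eqVneq k b) => [->|kb]; first by rewrite eqxx; case: (eqVneq a b).
by rewrite (negbTE ka) (negbTE kb).
Qed.

Lemma sw_inj : injective sw.
Proof. exact: (can_inj sw_inv). Qed.

Lemma sw_out k : k \notin B -> sw k = k.
Proof.
move=> kB; rewrite /sw; case: eqP => [E|_]; first by subst; rewrite aB in kB.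
by case: eqP => [E|_] //; subst; rewrite bB in kB.
Qed.

Lemma sw_B k : (sw k \in B) = (k \in B).
Proof.
rewrite /sw; case: eqP => [->|_]; first by rewrite aB bB.
by case: eqP => [->|_] //; rewrite aB bB.
Qed.

Definition g (x : bs n) : bs n := [ffun k => x (sw k) (+) (x0 (sw k) (+) x0 k)].

Lemma g_inv x : g (g x) = x.
Proof.
apply/ffunP => k; rewrite !ffunE sw_inv.
by case: (x k); case: (x0 k); case: (x0 (sw k)).
Qed.

Lemma g_inj : injective g.
Proof. exact: (can_inj g_inv). Qed.

Lemma g_x0 : g x0 = x0.
Proof. by apply/ffunP => k; rewrite !ffunE; case: (x0 k); case: (x0 (sw k)). Qed.

Lemma g_out x k : k \notin B -> g x k = x k.
Proof. by move=> kB; rewrite ffunE sw_out // addbb addbF. Qed.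

Lemma OM_g z x : OM (g z) (g x) = OM z x.
Proof.
rewrite /OM; congr (n - _)%N.
rewrite [RHS](reindex_inj sw_inj) /=; apply: eq_bigr => k _; rewrite !ffunE.
by case: (x (sw k)); case: (z (sw k)); case: (x0 (sw k)); case: (x0 k).
Qed.

Lemma wrong_g x : wrong (g x) = wrong x.
Proof.
apply/setP => k; rewrite !inE; case kC: (k \in C') => //=.
have kB : k \notin B by rewrite (disjointFl dBC' kC).
rewrite g_out //; congr (_ != _); rewrite /tv; case: w => [?|] //.
rewrite g_out //; apply/negP => hB.
by move: (partner_in kC); rewrite (disjointFr dBC hB).
Qed.

Lemma stopb_g x : stopb (g x) = stopb x.
Proof. by rewrite /stopb wrong_g. Qed.

Lemma pj_g x : pj (g x) = pj x.
Proof. by rewrite /pj wrong_g. Qed.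

Lemma mut_g x i : g (mut x i) = mut (g x) (sw i).
Proof.
apply/ffunP => k; rewrite !ffunE pj_g.
have -> : (sw k == i) = (k == sw i).
  by apply/eqP/eqP => [<-|->]; rewrite sw_inv.
have -> : (Some (sw k) == pj x) = (Some k == pj x).
  case E: (pj x) => [j|] //.
  have jB : j \notin B by apply/negP => hB; move: (pj_C' E); rewrite (disjointFr dBC' hB).
  apply/eqP/eqP => [[H]|[H]]; congr Some.
    by rewrite -(sw_inv k) H sw_out.
  by rewrite H sw_out.
by case: (x (sw k)); case: (x0 (sw k)); case: (x0 k); case: (_ || _).
Qed.

Lemma offsf_g x y : offsf (g x) (g y) = offsf x y.
Proof.
rewrite !ffunE (inj_eq g_inj); case: ifP => // _.
rewrite (reindex_inj sw_inj) /=; apply: eq_big => [i|i _]; first by rewrite sw_B.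
by rewrite -mut_g (inj_eq g_inj).
Qed.

Lemma sel_g z x y : sel (g z) (g x) (g y) = g (sel z x y).
Proof. by rewrite !selE !OM_g; case: ifP. Qed.

Lemma kern_g z x x' : kern Sg (g z) (g x) (g x') = kern Sg z x x'.
Proof.
rewrite /kern /= stopb_g (inj_eq g_inj); case: ifP => // _.
rewrite (reindex_inj g_inj) /=; apply: eq_bigr => y _.
by rewrite offsf_g sel_g (inj_eq g_inj).
Qed.

Lemma law_g z t x : law Sg (g z) t x0 (g x) = law Sg z t x0 x.
Proof.
elim: t x => [|t IH] x /=; first by rewrite -{1}g_x0 (inj_eq g_inj).
rewrite (reindex_inj g_inj) /=; apply: eq_bigr => y _.
by rewrite IH kern_g.
Qed.

Lemma targ_g N zout : g (targ B N x0 zout) = targ B (sw @^-1: N) x0 zout.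
Proof.
apply/ffunP => k; rewrite !ffunE sw_B inE.
case: ifP => kB; last by rewrite sw_out ?kB // addbb addbF.
by case: (sw k \in N); case: (x0 (sw k)); case: (x0 k).
Qed.

Lemma nonopt_g z x : B :&: nonopt (g z) (g x) = sw @^-1: (B :&: nonopt z x).
Proof.
apply/setP => k; rewrite !inE sw_B !ffunE; congr (_ && _).
by case: (x (sw k)); case: (z (sw k)); case: (x0 (sw k)); case: (x0 k).
Qed.

Lemma preim_inv (A : {set 'I_n}) : sw @^-1: (sw @^-1: A) = A.
Proof. by apply/setP => k; rewrite !inE sw_inv. Qed.

Lemma nsub_g m (N : {set 'I_n}) : (sw @^-1: N \in nsub B m) = (N \in nsub B m).
Proof.
rewrite !inE card_preimset //; last exact: sw_inj.
congr (_ && _); apply/subsetP/subsetP => H k.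
  by move=> kN; rewrite -sw_B; apply: H; rewrite inE sw_inv.
by rewrite inE => /H; rewrite sw_B.
Qed.

Lemma prob_sym m zout t (S0 : {set 'I_n}) :
  prob_stop Sg B m x0 zout t (fun N x => B :&: nonopt (targ B N x0 zout) x == S0) =
  prob_stop Sg B m x0 zout t (fun N x => B :&: nonopt (targ B N x0 zout) x == sw @^-1: S0).
Proof.
rewrite /prob_stop; congr (_ * _).
rewrite [LHS](reindex_inj (@can_inj _ _ (fun A : {set 'I_n} => sw @^-1: A) (fun A : {set 'I_n} => sw @^-1: A) preim_inv)) /=.
apply: eq_big => [N|N _]; first by rewrite nsub_g.
rewrite [LHS](reindex_inj g_inj) /=; apply: eq_big => [x|x _]; last first.
  by rewrite -targ_g law_g.
rewrite stopb_g -targ_g nonopt_g; congr (_ && _).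
by apply/eqP/eqP => [<-|->]; rewrite preim_inv.
Qed.

End Sym.

Lemma prob_unif x0 m zout t (S1 S2 : {set 'I_n}) :
  S1 \subset B -> S2 \subset B -> #|S1| = #|S2| ->
  prob_stop Sg B m x0 zout t (fun N x => B :&: nonopt (targ B N x0 zout) x == S1) =
  prob_stop Sg B m x0 zout t (fun N x => B :&: nonopt (targ B N x0 zout) x == S2).
Proof.
move=> h1 h2 hc; move Ek: #|S1 :\: S2| => k.
elim: k S1 h1 hc Ek => [|k IH] S1 h1 hc Ek.
  have : S1 == S2 by rewrite eqEcard hc leqnn andbT -setD_eq0 -cards_eq0 Ek.
  by move/eqP ->.
have [a ha] : exists a, a \in S1 :\: S2 by apply/card_gt0P; rewrite Ek.
have [b hb] : exists b, b \in S2 :\: S1.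
  apply/card_gt0P; rewrite cardsD setIC -hc -cardsD Ek //.
move: ha hb; rewrite !inE => /andP[aS2 aS1] /andP[bS1 bS2].
have aB : a \in B by move/subsetP: h1; apply.
have bB : b \in B by move/subsetP: h2; apply.
rewrite (@prob_sym a b x0 aB bB); apply: IH.
- apply/subsetP => y; rewrite inE -(sw_B aB bB y); exact: (subsetP h1).
- by rewrite card_preimset //; exact: sw_inj.
- have -> : (sw a b @^-1: S1) :\: S2 = (S1 :\: S2) :\ a.
    apply/setP => y; rewrite !inE /sw.
    case: (eqVneq y a) => [->|ya]; first by rewrite (negbTE bS1) andbF.
    case: (eqVneq y b) => [->|yb]; first by rewrite bS2 (negbTE bS1) !andbF.
    by [].
  by move: Ek; rewrite (cardsD1 a (S1 :\: S2)) !inE aS2 aS1 add1n => [[]].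
Qed.

Lemma nonopt_targ (N : {set 'I_n}) x0 zout : N \subset B -> B :&: nonopt (targ B N x0 zout) x0 = N.
Proof.
move=> hN; apply/setP => k; rewrite !inE ffunE.
case kB: (k \in B) => /=.
  by case: (k \in N); case: (x0 k).
by apply/esym/negbTE; apply: contraFN kB; apply: (subsetP hN).
Qed.

Lemma nsub_pos m : (m <= #|B|)%N -> (0 < #|nsub B m|)%N.
Proof.
move=> hm; apply/card_gt0P; exists [set k in take m (enum B)].
rewrite inE; apply/andP; split.
  by apply/subsetP => k; rewrite inE => /mem_take; rewrite mem_enum.
have U : uniq (take m (enum B)) by apply: take_uniq; exact: enum_uniq.
by apply/eqP; rewrite cardsE (card_uniqP U) size_takel // -cardE.
Qed.

Lemma prob_lb m x0 zout t (eps : R) : (m <= #|B|)%N ->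
  (forall N, N \in nsub B m ->
     eps <= \sum_(x | stopb x && true) law Sg (targ B N x0 zout) t x0 x) ->
  eps <= prob_stop Sg B m x0 zout t (fun _ _ => true).
Proof.
move=> hm H; rewrite /prob_stop.
have hp := nsub_pos hm.
have P0 : 0 < (#|nsub B m|%:R : R) by rewrite ltr0n.
rewrite ler_pdivlMl //.
apply: le_trans (_ : \sum_(N in nsub B m) eps <= _); last by apply: ler_sum => N hN; exact: H.
have E : \sum_(N in nsub B m) eps = #|nsub B m|%:R * eps.
  by rewrite sumr_const mulr_natl.
by rewrite E.
Qed.

Lemma law0_fV z x0 : \sum_x law Sg z 0 x0 x * fV x = fV x0.
Proof.
rewrite /= (bigD1 x0) //= eqxx mul1r big1 ?addr0 //.
by move=> y /negbTE ->; rewrite mul0r.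
Qed.

Lemma stop_lb z x0 t : 1 - \sum_x law Sg z t x0 x * fV x <=
   \sum_(x | stopb x && true) law Sg z t x0 x.
Proof.
have -> : \sum_(x | stopb x && true) law Sg z t x0 x = \sum_(x | stopb x) law Sg z t x0 x.
  by apply: eq_bigl => x; rewrite andbT.
rewrite stop_mass; have := nonstop_mass z x0 t; lra.
Qed.

Lemma part1 (beta c : R) x0 zout m :
  0 < beta -> 0 < c -> 10 <= c * ln (n%:R) -> (m <= #|B|)%N ->
  beta * #|B|%:R <= m%:R -> #|C|%:R <= beta * #|B|%:R / 2 ->
  exists t : nat, t%:R <= c * #|C|%:R * ln (n%:R) / beta /\
    1 - expR (- (1 / 8 * c * ln (n%:R))) <= prob_stop Sg B m x0 zout t (fun _ _ => true).
Proof.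
move=> hb hc hs hmB hm hC.
have eP := expR_gt0 (- (1 / 8 * c * ln (n%:R))).
case: (posnP #|C|) => hk.
  exists 0%N; split; first by rewrite hk mulr0 !mul0r.
  apply: prob_lb hmB _ => N hN; apply: le_trans (stop_lb _ _ _).
  rewrite law0_fV.
  rewrite /fV; have -> : stopb x0 by rewrite /stopb -cards_eq0 -leqn0 -hk wrong_le.
  lra.
set k : R := #|C|%:R.
have k1 : 1 <= k by rewrite /k ler1n.
have Bpos : 0 < (#|B|%:R : R) by move: hC; rewrite -/k => hC'; nra.
have hb1 : beta <= 1.
  have : (m%:R : R) <= #|B|%:R by rewrite ler_nat.
  move=> hmB'; have := le_trans hm hmB'.
  by rewrite -{2}[#|B|%:R]mul1r ler_pM2r.
set s := c * ln (n%:R).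
set x := c * k * ln (n%:R) / beta.
have bx : beta * x = k * s by rewrite /x /s; field; lra.
have cks : c * k * ln (n%:R) = k * s by rewrite /s; ring.
have x0p : 0 <= x by rewrite /x cks; apply: divr_ge0; [apply: mulr_ge0; [lra | rewrite /s; lra] | lra].
exists (Num.truncn x); split; first by rewrite truncn_le.
set t := Num.truncn x.
have ht : x < t%:R + 1 by rewrite natr1; exact: truncnS_gt.
have hbt : k * s - beta <= beta * t%:R.
  have h1 : 0 <= beta * (t%:R + 1 - x) by apply: mulr_ge0; lra.
  by move: h1; rewrite mulrBr mulrDr mulr1 bx; lra.
apply: prob_lb hmB _ => N hN; apply: le_trans (stop_lb _ _ _).
have hNB : N \subset B by move: hN; rewrite inE => /andP[].
have hx0N : (m <= #|B :&: nonopt (targ B N x0 zout) x0|)%N.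
  by rewrite nonopt_targ //; move: hN; rewrite inE => /andP[_ /eqP ->].
have V := Vdecay t hb hb1 hm hC hx0N.
set q := 1 - beta / 4.
have q0 : 0 <= q by rewrite /q; lra.
have fx : fV x0 <= 2 ^+ #|C|.
  have h12 : (1 : R) <= 2 by rewrite ler1n.
  rewrite /fV; case: (stopb x0); first by apply: exprn_ge0; exact: two_ge0.
  exact: (ler_weXn2l h12 (wrong_le x0)).
have e2 : (2 : R) ^+ #|C| <= expR k.
  rewrite /k -[X in expR X]mulr1 expRM_natl.
  apply: lerXn2r; rewrite ?nnegrE; [exact: two_ge0 | exact: ltW (expR_gt0 _) | exact: two_le_e].
have eq : q ^+ t <= expR (- (beta / 4) * t%:R).
  rewrite expRM_natr; apply: lerXn2r; rewrite ?nnegrE; [exact: q0 | exact: ltW (expR_gt0 _) | exact: expR_ge1Dx].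
have qt0 : 0 <= q ^+ t by apply: exprn_ge0.
have fin : q ^+ t * fV x0 <= expR (- (1 / 8 * c * ln (n%:R))).
  apply: le_trans (_ : q ^+ t * 2 ^+ #|C| <= _); first exact: ler_wpM2l.
  apply: le_trans (_ : expR (- (beta / 4) * t%:R) * expR k <= _).
    by apply: ler_pM => //; apply: exprn_ge0; exact: two_ge0.
  rewrite -expRD ler_expR.
  have e8 : 1 / 8 * c * ln (n%:R) = s / 8 by rewrite /s; ring.
  rewrite e8; apply: num_ineq => //.
by rewrite lerD2l lerN2; exact: le_trans V fin.
Qed.

Lemma part2 (beta : R) x0 zout m (N : {set 'I_n}) t x :
  beta * #|B|%:R <= m%:R -> N \in nsub B m -> stopb x ->
  0 < law Sg (targ B N x0 zout) t x0 x ->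
  [/\ goal_ok w C C' x0 x, (forall i, i \notin B -> i \notin C' -> x i = x0 i)
     & beta * #|B|%:R - #|C|%:R <= #|B :&: nonopt (targ B N x0 zout) x|%:R].
Proof.
move=> hm hN hs hp; have [H1 H2] := law_Inv hp.
move: hN; rewrite inE => /andP[hNB /eqP hNm].
rewrite nonopt_targ // hNm in H2.
have wx0 := wrong_le x0.
have Ht : forall j, j \in C' -> x j = tv x j.
  move=> j hj; apply/eqP; apply: contraTT hs => hne.
  by rewrite /stopb; apply/set0Pn; exists j; rewrite inE hj hne.
split => //.
  rewrite /goal_ok; move: Ht; rewrite /tv; case E: w => [w'|] Ht.
    by move=> j hj; exact: Ht.
  move=> i j hi hj hij; rewrite Ht // /partner -hij nth_index ?mem_enum //.
  by apply: H1; [rewrite (disjointFl dBC hi) | rewrite (disjointFr dCC' hi)].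
have hmn : (m <= #|B :&: nonopt (targ B N x0 zout) x| + #|C|)%N.
  move: H2 wx0; move: #|wrong x| #|wrong x0| #|B :&: nonopt (targ B N x0 zout) x| #|C| => *; lia.
have hmR : (m%:R : R) <= #|B :&: nonopt (targ B N x0 zout) x|%:R + #|C|%:R.
  by rewrite -natrD ler_nat.
move: hm hmR; move: (m%:R : R) (#|C|%:R : R) (#|B :&: nonopt (targ B N x0 zout) x|%:R : R) => *.
lra.
Qed.

End S.

Theorem lemma2 (R : realType) :
  exists kappa : R, 0 < kappa /\ exists c1 : R,
  forall (n : nat) (B C C' : {set 'I_n}),
    [disjoint B & C] -> [disjoint B & C'] -> [disjoint C & C'] -> #|C| = #|C'| ->
  forall w : option (bs n),
  exists S : strategy R n,
  forall (beta c : R) (x0 zout : bs n) (m : nat),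
    0 < beta -> 0 < c -> c1 <= c * ln (n%:R) ->
    (m <= #|B|)%N -> beta * #|B|%:R <= m%:R ->
    #|C|%:R <= beta * #|B|%:R / 2 ->
    [/\ (* the copy finishes within c |C| log n / beta iterations w.p. 1 - n^(-kappa c) *)
        exists t : nat, t%:R <= c * #|C|%:R * ln (n%:R) / beta /\
          1 - expR (- (kappa * c * ln (n%:R))) <= prob_stop S B m x0 zout t (fun _ _ => true),
        (* at the stopping time: C copied into C' (resp. C' overwritten by w), other bits outside B untouched,
           at least b0 - |C| non-optimal bits left in B *)
        forall (N : {set 'I_n}) (t : nat) (x : bs n),
          N \in nsub B m -> stop S x -> 0 < law S (targ B N x0 zout) t x0 x ->
          [/\ goal_ok w C C' x0 x,
              (forall i, i \notin B -> i \notin C' -> x i = x0 i)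
            & beta * #|B|%:R - #|C|%:R <= #|B :&: nonopt (targ B N x0 zout) x|%:R]
      & (* the non-optimal positions in B at the stopping time are uniform *)
        forall (t : nat) (S1 S2 : {set 'I_n}),
          S1 \subset B -> S2 \subset B -> #|S1| = #|S2| ->
          prob_stop S B m x0 zout t (fun N x => B :&: nonopt (targ B N x0 zout) x == S1)
          = prob_stop S B m x0 zout t (fun N x => B :&: nonopt (targ B N x0 zout) x == S2)].
Proof.
exists (1 / 8); split; first by lra.
exists 10 => n B C C' dBC dBC' dCC' cCC' w.
exists (@Sg R n B C C' w).
move=> beta c x0 zout m hb hc hs hmB hm hC; split.
- by apply: part1.
- move=> N t x hN hst hp; exact: (part2 dBC dBC' dCC' cCC' hm hN hst hp).
- move=> t S1 S2 h1 h2 hc'; exact: (prob_unif R w dBC dBC' cCC' x0 m zout t h1 h2 hc').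
Qed.
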